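(* Let $S_0,S_1,S_2$ be pair-partitions of $[2k]$. Then, as functions on Young diagrams, $N^{(2)}_{S_0,S_1,S_2}=2^{|\mathcal{L}(S_0,S_1)|}\,N^{(1)}_{S_0,S_1,S_2}$.
   Context: Pair-partitions of $[2k]$ are sets of disjoint two-element subsets with union $[2k]$, identified with fixed-point-free involutions. $\mathcal{L}(S_0,S_1)$ is the bipartite graph with a black vertex per pair of $S_0$, a white vertex per pair of $S_1$, and an edge for each $i\in[2k]$ joining the pairs containing $i$; it is a union of loops and $|\mathcal{L}(S_0,S_1)|$ is the number of loops. $N^{(1)}_{S_0,S_1,S_2}(\lambda)$ is the number of functions $f$ from $[2k]$ to the boxes of $\lambda$ such that for all $l$: $f(l)=f(S_0(l))$; $f(l)$ and $f(S_1(l))$ are in the same column; $f(l)$ and $f(S_2(l))$ are in the same row. $2\lambda=(2\lambda_1,2\lambda_2,\dots)$; two boxes of $2\lambda$ are neighbors if they are in the same row and in columns $2i+1$ and $2i+2$ for some $i\ge0$. $N^{(2)}_{S_0,S_1,S_2}(\lambda)$ is the number of functions $f$ from $[2k]$ to the boxes of $2\lambda$ such that for all $l$: $f(l)$ and $f(S_0(l))$ are neighbors; $f(l)$ and $f(S_0\circ S_1(l))$ are in the same column; $f(l)$ and $f(S_2(l))$ are in the same row. *)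

(* Defs.v *)
From mathcomp Require Import all_boot.
Set Implicit Arguments. Unset Strict Implicit. Unset Printing Implicit Defensive.

Definition pair_partition (n : nat) (S : 'I_n -> 'I_n) : Prop :=
  forall i, S (S i) = i /\ S i != i.

Definition young_diagram (lam : seq nat) : bool :=
  sorted geq lam && all (fun x => 0 < x) lam.

(* Boxes are (row, column), 0-indexed; the finite ambient type bounds them. *)
Definition boxT (lam : seq nat) : finType := ('I_(size lam) * 'I_(sumn lam))%type.
Definition in_diag (lam : seq nat) (b : boxT lam) : bool :=
  (b.2 : nat) < nth 0 lam b.1.
Definition same_row lam (a b : boxT lam) : bool := (a.1 : nat) == b.1.
Definition same_col lam (a b : boxT lam) : bool := (a.2 : nat) == b.2.

Definition double_diag (lam : seq nat) : seq nat := map double lam.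

(* neighbours: same row, (1-indexed) columns 2i+1 and 2i+2, i.e. 0-indexed
   columns 2i and 2i+1 (two distinct boxes). *)
Definition neighbors lam (a b : boxT lam) : bool :=
  same_row a b && ((a.2 : nat)./2 == (b.2 : nat)./2) && ((a.2 : nat) != b.2).

Definition N1 (n : nat) (S0 S1 S2 : 'I_n -> 'I_n) (lam : seq nat) : nat :=
  #|[pred f : {ffun 'I_n -> boxT lam} |
     [forall l, [&& in_diag (f l), f l == f (S0 l),
                    same_col (f l) (f (S1 l)) & same_row (f l) (f (S2 l))]]]|.

Definition N2 (n : nat) (S0 S1 S2 : 'I_n -> 'I_n) (lam : seq nat) : nat :=
  #|[pred f : {ffun 'I_n -> boxT (double_diag lam)} |
     [forall l, [&& in_diag (f l), neighbors (f l) (f (S0 l)),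
                    same_col (f l) (f (S0 (S1 l))) & same_row (f l) (f (S2 l))]]]|.

(* The bipartite graph L(S0,S1): black vertices (false, {i, S0 i}),
   white vertices (true, {i, S1 i}); a black and a white vertex are joined
   by an edge for each i in both pairs. *)
Definition LvertT (n : nat) : finType := (bool * {set 'I_n})%type.
Definition Lvert n (S0 S1 : 'I_n -> 'I_n) : pred (LvertT n) :=
  fun v => [exists i, v == (false, [set i; S0 i])] || [exists i, v == (true, [set i; S1 i])].
Definition Ladj n (S0 S1 : 'I_n -> 'I_n) : rel (LvertT n) :=
  fun v w => [&& Lvert S0 S1 v, Lvert S0 S1 w, v.1 != w.1 & (v.2 :&: w.2 != set0)].
(* number of loops = number of connected components of L(S0,S1) *)
Definition nloops n (S0 S1 : 'I_n -> 'I_n) : nat := n_comp (Ladj S0 S1) (Lvert S0 S1).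

(* Main.v *)
Require Import Defs.
From mathcomp Require Import all_boot zify.
Set Implicit Arguments. Unset Strict Implicit. Unset Printing Implicit Defensive.

Lemma card_bij (T U : finType) (A : pred T) (B : pred U) (f : T -> U) (g : U -> T) :
  (forall x, A x -> B (f x)) -> (forall y, B y -> A (g y)) ->
  (forall x, A x -> g (f x) = x) -> (forall y, B y -> f (g y) = y) ->
  #|A| = #|B|.
Proof.
move=> fAB gBA gf fg; apply/eqP; rewrite eqn_leq; apply/andP; split.
- rewrite -(@card_in_imset _ _ f (mem A)).
    apply: subset_leq_card; apply/subsetP => y /imsetP [x Ax ->]; exact: fAB.
  by move=> x y Ax Ay /(congr1 g); rewrite !gf.
- rewrite -(@card_in_imset _ _ g (mem B)).
    apply: subset_leq_card; apply/subsetP => y /imsetP [x Ax ->]; exact: gBA.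
  by move=> x y Ax Ay /(congr1 f); rewrite !fg.
Qed.

Lemma count_comp (T : finType) (e : rel T) (a : pred T) :
  connect_sym e -> (forall x y, e x y -> a x = a y) ->
  #|[pred h : {ffun T -> bool} | [forall x, forall y, e x y ==> (h x == h y)]
       && [forall x, ~~ a x ==> ~~ h x]]| = 2 ^ n_comp e a.
Proof.
move=> sym cl.
have clc : forall x y, connect e x y -> a x = a y.
  move=> x y; exact: (@closed_connect _ e a cl x y).
have hc : forall h : {ffun T -> bool}, (forall x y, e x y -> h x = h y) ->
   forall x y, connect e x y -> h x = h y.
  move=> h H x y; exact: (@closed_connect _ e [pred z | h z] H x y).
have e2 : #|(predT : pred bool)| = 2 by rewrite cardT enumT unlock.
have eD : n_comp e a = #|[pred x | roots e x && a x]| by apply: eq_card => x; rewrite !inE.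
rewrite -e2 eD -(card_pffun_on false [pred x | roots e x && a x] predT).
apply: (@card_bij _ _ _ _ (fun h : {ffun T -> bool} => [ffun x => (roots e x && a x) && h x])
                 (fun h' : {ffun T -> bool} => [ffun x => a x && h' (root e x)])).
- move=> h _; apply/pffun_onP; split.
    by apply/subsetP => x; rewrite !inE ffunE /=; case: (roots e x && a x).
  by move=> b _.
- move=> h' /pffun_onP [sub _]; move/subsetP: sub => sub; rewrite inE; apply/andP; split.
    apply/forallP => x; apply/forallP => y; apply/implyP => exy.
    rewrite !ffunE (cl _ _ exy) (rootP sym (connect1 exy)) //.
  by apply/forallP => x; apply/implyP; rewrite ffunE => /negbTE ->.
- move=> h; rewrite inE => /andP [/forallP H1 /forallP H2].
  have H1' : forall x y, e x y -> h x = h y.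
    by move=> x y exy; move: (H1 x) => /forallP /(_ y); rewrite exy => /eqP.
  apply/ffunP => x; rewrite !ffunE (roots_root sym) /=.
  have -> : a (root e x) = a x by rewrite -(clc _ _ (connect_root e x)).
  case ax: (a x) => /=; first by rewrite -(hc h H1' _ _ (connect_root e x)).
  by move: (H2 x); rewrite ax => /negbTE ->.
- move=> h' /pffun_onP [sub _]; move/subsetP: sub => sub; apply/ffunP => x; rewrite !ffunE.
  case rx: (roots e x); case ax: (a x) => //=.
  + by rewrite (eqP rx).
  + apply/esym/negbTE/negP => hx; have := sub x; rewrite !inE hx rx /=; move=> /(_ isT); by rewrite ?ax ?rx.
  + apply/esym/negbTE/negP => hx; have := sub x; rewrite !inE hx rx ax /=; move=> /(_ isT); by rewrite ?ax ?rx.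
  + apply/esym/negbTE/negP => hx; have := sub x; rewrite !inE hx rx ax /=; move=> /(_ isT); by rewrite ?ax ?rx.
Qed.

Section Color.
Variables (n : nat) (S0 S1 : 'I_n -> 'I_n).
Hypotheses (H0 : pair_partition S0) (H1 : pair_partition S1).

Let sg := fun i => S1 (S0 i).
Let tau := fun i => S0 (S1 i).

Lemma CS0K i : S0 (S0 i) = i. Proof. by case: (H0 i). Qed.
Lemma CS1K i : S1 (S1 i) = i. Proof. by case: (H1 i). Qed.

Lemma sg_inj : injective sg.
Proof. by move=> x y /(congr1 tau); rewrite /tau /sg !CS1K !CS0K. Qed.

Lemma S0_iter a x : S0 (iter a sg x) = iter a tau (S0 x).
Proof. by elim: a => //= a IH; rewrite -IH /sg /tau. Qed.

Lemma tau_sg y : tau (sg y) = y.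
Proof. by rewrite /tau /sg CS1K CS0K. Qed.

Lemma tau_sg_iter a x : iter a tau (iter a sg x) = x.
Proof. elim: a x => // a IH x; rewrite [iter a.+1 tau _]iterSr iterS tau_sg; exact: IH. Qed.

Lemma not_conn i : ~~ fconnect sg i (S0 i).
Proof.
apply/negP => /iter_findex; move: (findex _ _ _) => m E.
have := odd_double_half m; move: (odd m) (m./2) => [] a Em; rewrite -Em -addnn in E.
- have : S0 (iter a sg i) = sg (iter a sg i).
    rewrite S0_iter -E iterD iterD.
    by rewrite [iter true _ _]/= -iterS iterSr tau_sg_iter.
  by move=> E2; case: (H1 (S0 (iter a sg i))) => _ /eqP; apply; rewrite {2}E2.
- have : S0 (iter a sg i) = iter a sg i.
    by rewrite S0_iter -E iterD [iter false _ _]/= iterD tau_sg_iter.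
  by case: (H0 (iter a sg i)) => _ /eqP.
Qed.

Lemma sg_sym : connect_sym (frel sg).
Proof. exact: fconnect_sym sg_inj. Qed.

Definition eps0 (i : 'I_n) : bool :=
  (val (froot sg i) < val (froot sg (S0 i)))%N.

Lemma root_neq i : val (froot sg i) != val (froot sg (S0 i)).
Proof.
apply/negP => /eqP /val_inj /(rootP sg_sym) C; have := not_conn i; by rewrite C.
Qed.

Lemma root_S1 i : froot sg (S1 i) = froot sg (S0 i).
Proof. apply/esym/(rootP sg_sym); have := fconnect1 sg (S0 i); by rewrite /sg CS0K. Qed.

Lemma root_S0S1 i : froot sg (S0 (S1 i)) = froot sg i.
Proof. apply/(rootP sg_sym); have := fconnect1 sg (S0 (S1 i)); by rewrite /sg CS0K CS1K. Qed.

Lemma ltn_flip (x y : nat) : x != y -> (y < x) = ~~ (x < y).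
Proof. by case: ltngtP. Qed.

Lemma eps0_S0 i : eps0 (S0 i) = ~~ eps0 i.
Proof. by rewrite /eps0 CS0K ltn_flip // root_neq. Qed.

Lemma eps0_S1 i : eps0 (S1 i) = ~~ eps0 i.
Proof. by rewrite /eps0 root_S1 root_S0S1 ltn_flip // root_neq. Qed.

End Color.

Section LG.
Variables (n : nat) (S0 S1 : 'I_n -> 'I_n).
Hypotheses (H0 : pair_partition S0) (H1 : pair_partition S1).

Lemma pairset (S : 'I_n -> 'I_n) i p : (forall x, S (S x) = x) ->
  p \in [set i; S i] -> [set p; S p] = [set i; S i].
Proof. by move=> SK; rewrite !inE => /orP [/eqP -> | /eqP ->] //; rewrite SK setUC. Qed.

Lemma Lvert_cases v : Lvert S0 S1 v ->
  exists i, v = (false, [set i; S0 i]) \/ v = (true, [set i; S1 i]).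
Proof.
by case/orP => /existsP [i /eqP ->]; exists i; [left|right].
Qed.

Lemma LvF i : Lvert S0 S1 (false, [set i; S0 i]).
Proof. by apply/orP; left; apply/existsP; exists i. Qed.
Lemma LvT i : Lvert S0 S1 (true, [set i; S1 i]).
Proof. by apply/orP; right; apply/existsP; exists i. Qed.

Lemma adjFT i j x : x \in [set i; S0 i] -> x \in [set j; S1 j] ->
  Ladj S0 S1 (false, [set i; S0 i]) (true, [set j; S1 j]).
Proof.
move=> xi xj; rewrite /Ladj LvF LvT /=; apply/set0Pn; exists x; by rewrite inE xi xj.
Qed.

Definition Vset := [pred d : {ffun 'I_n -> bool} |
  [forall l, (d (S0 l) == d l) && (d (S1 l) == d l)]].
Definition HL := [pred h : {ffun LvertT n -> bool} |
  [forall x, forall y, Ladj S0 S1 x y ==> (h x == h y)] && [forall x, ~~ Lvert S0 S1 x ==> ~~ h x]].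

Lemma card_HL : #|HL| = 2 ^ nloops S0 S1.
Proof.
rewrite /nloops -count_comp //.
- apply: sym_connect_sym => v w; rewrite /Ladj eq_sym setIC.
  by case: (Lvert S0 S1 v); case: (Lvert S0 S1 w).
- by move=> v w /and4P [-> -> _ _].
Qed.

Definition phiC (h : {ffun LvertT n -> bool}) : {ffun 'I_n -> bool} :=
  [ffun i => h (false, [set i; S0 i])].
Definition psiC (d : {ffun 'I_n -> bool}) : {ffun LvertT n -> bool} :=
  [ffun v => if Lvert S0 S1 v then (if [pick p in v.2] is Some p then d p else false) else false].

Lemma LS0K i : S0 (S0 i) = i. Proof. by case: (H0 i). Qed.
Lemma LS1K i : S1 (S1 i) = i. Proof. by case: (H1 i). Qed.

Lemma dconst d : d \in Vset -> forall v x, Lvert S0 S1 v -> x \in v.2 -> forall y, y \in v.2 -> d x = d y.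
Proof.
move=> /forallP dV v x /Lvert_cases [i [->|->]] /=.
all: move=> xi y yi; move: xi yi; rewrite !inE => /orP [] /eqP -> /orP [] /eqP -> //.
all: by case/andP: (dV i) => /eqP E0 /eqP E1; rewrite ?E0 ?E1.
Qed.

Lemma val_psi d : d \in Vset -> forall v x, Lvert S0 S1 v -> x \in v.2 -> psiC d v = d x.
Proof.
move=> dV v x Lv xv; rewrite ffunE Lv; case: pickP => [p pv|none].
  exact: (dconst dV Lv).
by have := none x; rewrite xv.
Qed.

Lemma hadj h : h \in HL -> forall v w, Ladj S0 S1 v w -> h v = h w.
Proof. by case/andP => /forallP H _ v w a; move: (H v) => /forallP /(_ w); rewrite a => /eqP. Qed.
Lemma hout h : h \in HL -> forall v, ~~ Lvert S0 S1 v -> h v = false.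
Proof. by case/andP => _ /forallP H v nv; move: (H v); rewrite nv => /negbTE. Qed.

Lemma card_V : #|Vset| = 2 ^ nloops S0 S1.
Proof.
rewrite -card_HL; eapply (@card_bij _ _ _ _ (fun d => psiC d) (fun h => phiC h)).
- move=> d dV; apply/andP; split.
    apply/forallP => v; apply/forallP => w; apply/implyP => /andP [Lv /andP [Lw /andP [_ /set0Pn [x]]]].
    by rewrite inE => /andP [xv xw]; rewrite (val_psi dV Lv xv) (val_psi dV Lw xw).
  by apply/forallP => v; apply/implyP; rewrite ffunE => /negbTE ->.
- move=> h hH; apply/forallP => l; rewrite !ffunE; apply/andP; split; apply/eqP.
    by rewrite (pairset (LS0K) (p := S0 l) (i := l)) // !inE eqxx orbT.
  rewrite (hadj hH (w := (true, [set l; S1 l]))); last by apply: (adjFT (x := S1 l)); rewrite !inE eqxx ?orbT.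
  by rewrite (hadj hH (v := (false, [set l; S0 l])) (w := (true, [set l; S1 l]))) //; apply: (adjFT (x := l)); rewrite !inE eqxx.
- move=> d dV; apply/ffunP => i; rewrite ffunE; apply: (val_psi dV (LvF i)); by rewrite !inE eqxx.
- move=> h hH; apply/ffunP => v; rewrite ffunE.
  case Lv: (Lvert S0 S1 v); last by rewrite (hout hH) // Lv.
  case: pickP => [p pv|none]; rewrite ?ffunE.
    case: (Lvert_cases Lv) pv => i [] -> /= pv.
      by rewrite (pairset LS0K pv).
    by apply: hadj => //; apply: (adjFT (x := p)); rewrite // !inE eqxx.
  by case: (Lvert_cases Lv) none => i [] -> /(_ i); rewrite !inE eqxx.
Qed.
End LG.

Section Boxes.
Variable lam : seq nat.

Lemma sumn_dd : sumn (double_diag lam) = (sumn lam).*2.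
Proof. rewrite /double_diag; elim: lam => //= x s ->; by rewrite doubleD. Qed.
Lemma size_dd : size (double_diag lam) = size lam.
Proof. exact: size_map. Qed.
Lemma nth_dd r : nth 0 (double_diag lam) r = (nth 0 lam r).*2.
Proof. rewrite /double_diag; elim: lam r => [|x s IH] [|r] //=. Qed.

Lemma ltdc (c : 'I_(sumn lam)) (b : bool) : b + (val c).*2 < sumn (double_diag lam).
Proof. rewrite sumn_dd -!muln2; move: (ltn_ord c); change (val c) with (nat_of_ord c); case: b => /=; lia. Qed.
Lemma lthc (c : 'I_(sumn (double_diag lam))) : (val c)./2 < sumn lam.
Proof. rewrite ltn_half_double -sumn_dd; exact: ltn_ord. Qed.

Definition dbox (g : boxT lam) (b : bool) : boxT (double_diag lam) :=
  (cast_ord (esym size_dd) g.1, Ordinal (ltdc g.2 b)).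
Definition hbox (f : boxT (double_diag lam)) : boxT lam :=
  (cast_ord size_dd f.1, Ordinal (lthc f.2)).

Lemma odd_bd (b : bool) c : odd (b + c.*2) = b.
Proof. by rewrite oddD odd_double addbF oddb. Qed.

Lemma dbox_col g b : val (dbox g b).2 = b + (val g.2).*2. Proof. by []. Qed.

Lemma in_diag_d g b : in_diag (dbox g b) = in_diag g.
Proof.
rewrite /in_diag /= nth_dd; move: (nth 0 lam g.1) (val g.2) => m c.
rewrite -!muln2; case: b => /=; apply/idP/idP; lia.
Qed.
Lemma same_row_d g b g' b' : same_row (dbox g b) (dbox g' b') = same_row g g'.
Proof. by []. Qed.
Lemma same_col_d g b g' b' :
  same_col (dbox g b) (dbox g' b') = (val g.2 == val g'.2) && (b == b').
Proof.
rewrite /same_col /=; move: (val g.2) (val g'.2) => c c'.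
apply/eqP/andP => [E|[/eqP -> /eqP ->] //]; split.
  by rewrite -(half_bit_double c b) E half_bit_double.
by rewrite -(odd_bd b c) E odd_bd.
Qed.
Lemma neighbors_d g b g' b' :
  neighbors (dbox g b) (dbox g' b') = [&& same_row g g', val g.2 == val g'.2 & b != b'].
Proof.
rewrite /neighbors same_row_d /= !half_bit_double; case: (same_row g g') => //=.
case: eqP => //= E; rewrite E; apply/idP/idP; first by apply: contra => /eqP ->.
by apply: contra => /eqP E2; have := odd_bd b (val g'.2); rewrite E2 odd_bd => ->.
Qed.

Lemma hboxK g b : hbox (dbox g b) = g.
Proof. case: g => r c; congr pair; apply: val_inj => //=; exact: half_bit_double. Qed.
Lemma dboxK f : dbox (hbox f) (odd (val f.2)) = f.
Proof. case: f => r c; congr pair; apply: val_inj => //=; exact: odd_double_half. Qed.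

Lemma in_diag_h f : in_diag f -> in_diag (hbox f).
Proof. by rewrite /in_diag /= nth_dd ltn_half_double. Qed.
Lemma same_row_h f f' : same_row (hbox f) (hbox f') = same_row f f'.
Proof. by []. Qed.
Lemma same_col_h f f' : same_col f f' -> same_col (hbox f) (hbox f').
Proof. by rewrite /same_col /= => /eqP ->. Qed.
Lemma neighbors_h f f' : neighbors f f' -> hbox f = hbox f' /\ odd (val f.2) = ~~ odd (val f'.2).
Proof.
case/andP => /andP [/eqP R /eqP C] N; split.
  by case: f f' R C {N} => r c [r' c'] /= R C; congr pair; apply: val_inj.
have E1 := odd_double_half (val f.2); have E2 := odd_double_half (val f'.2).
move: N E1 E2; case: (odd (val f.2)); case: (odd (val f'.2)) => //= N E1 E2.
  by move: N; rewrite -E1 C E2 eqxx.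
by move: N; rewrite -E1 C E2 eqxx.
Qed.
End Boxes.

Section Main.
Variables (n : nat) (S0 S1 S2 : 'I_n -> 'I_n) (lam : seq nat).
Hypotheses (H0 : pair_partition S0) (H1 : pair_partition S1).

Definition A1 := [pred g : {ffun 'I_n -> boxT lam} |
  [forall l, [&& in_diag (g l), g l == g (S0 l), same_col (g l) (g (S1 l)) & same_row (g l) (g (S2 l))]]].
Definition A2 := [pred f : {ffun 'I_n -> boxT (double_diag lam)} |
  [forall l, [&& in_diag (f l), neighbors (f l) (f (S0 l)), same_col (f l) (f (S0 (S1 l))) & same_row (f l) (f (S2 l))]]].
Definition Phi (p : {ffun 'I_n -> boxT lam} * {ffun 'I_n -> bool}) : {ffun 'I_n -> boxT (double_diag lam)} :=
  [ffun l => dbox (p.1 l) (eps0 S0 S1 l (+) p.2 l)].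
Definition Psi (f : {ffun 'I_n -> boxT (double_diag lam)}) : {ffun 'I_n -> boxT lam} * {ffun 'I_n -> bool} :=
  ([ffun l => hbox (f l)], [ffun l => odd (val (f l).2) (+) eps0 S0 S1 l]).

Lemma main_card : #|A2| = #|A1| * #|Vset S0 S1|.
Proof.
rewrite -(cardsE A1) -(cardsE (Vset S0 S1)) -cardsX.
have e0S0 := eps0_S0 H0 H1; have e0S1 := eps0_S1 H0 H1.
eapply (@card_bij _ _ _ _ Psi Phi).
- move=> f /forallP F.
  suff : Psi f \in setX [set x0 in A1] [set x0 in Vset S0 S1] by [].
  rewrite in_setX !inE; apply/andP; split; apply/forallP => l; rewrite !ffunE.
  + have /and4P [fi fn fc fr] := F l; have /and4P [_ fn1 _ _] := F (S1 l).
    case: (neighbors_h fn) => h0 o0; case: (neighbors_h fn1) => h1 o1.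
    by rewrite in_diag_h // h1 same_col_h // same_row_h fr h0 eqxx.
  + have /and4P [fi fn fc fr] := F l; have /and4P [_ fn1 _ _] := F (S1 l).
    case: (neighbors_h fn) => h0 o0; case: (neighbors_h fn1) => h1 o1.
    have o0' : odd (val (f (S0 l)).2) = ~~ odd (val (f l).2) by rewrite o0 negbK.
    have fc' : val (f l).2 = val (f (S0 (S1 l))).2 := eqP fc.
    have o1' : odd (val (f (S1 l)).2) = ~~ odd (val (f l).2) by rewrite o1 -fc'.
    by rewrite o0' o1' e0S0 e0S1 addNb addbN negbK eqxx.
- move=> [g d] Y.
  have : (g, d) \in setX [set x0 in A1] [set x0 in Vset S0 S1] by [].
  rewrite in_setX !inE /= => /andP [/forallP G /forallP Dv].
  apply/forallP => l; rewrite !ffunE /=.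
  have /and4P [gi g0 gc gr] := G l; have /and4P [_ g0' _ _] := G (S1 l).
  have /andP [/eqP d0 /eqP d1] := Dv l.
  rewrite in_diag_d gi neighbors_d same_col_d same_row_d gr -(eqP g0) /same_row eqxx eqxx /=.
  have /andP [/eqP d0' _] := Dv (S1 l).
  rewrite -(eqP g0') !e0S0 e0S1 negbK d0 d0' d1.
  move: gc; rewrite /same_col => -> /=.
  by case: (eps0 S0 S1 l); case: (d l).
- move=> f _; apply/ffunP => l; rewrite !ffunE /=.
  by rewrite addbCA addbb addbF dboxK.
- move=> [g d] _; rewrite /Psi /=; congr pair; apply/ffunP => l; rewrite !ffunE.
    exact: hboxK.
  by rewrite dbox_col odd_bd; case: (eps0 S0 S1 l); case: (d l).
Qed.
End Main.

Theorem lemma3p2 (k : nat) (S0 S1 S2 : 'I_(2 * k) -> 'I_(2 * k)) :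
  pair_partition S0 -> pair_partition S1 -> pair_partition S2 ->
  forall lam : seq nat, young_diagram lam ->
    N2 S0 S1 S2 lam = 2 ^ nloops S0 S1 * N1 S0 S1 S2 lam.
Proof.
move=> H0 H1 _ lam _.
have E := main_card S2 lam H0 H1.
rewrite (card_V S1 H0) in E; rewrite [_ * N1 _ _ _ _]mulnC.
exact: E.
Qed.
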